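(* Let $t_0\overset{i_1}{-}t_1\overset{i_2}{-}\cdots\overset{i_k}{-}t_k$ be a path in $\mathbb T_n$. For $1\le i\le k$ and $i\le m\le k$, $$q_{t_i}^{t_0}(\hat{\mathbf y}^{\mathbf c_m^+})=\hat{\mathbf y}^{\mathbf c_m^+}\prod_{j=1}^{i}L_j^{-(\hat{\mathbf c}_m^+,\,d_{(j)}\mathbf c_j)_{D_0R}},$$ where $q_{t_i}^{t_0}=q_{i_1;t_0}\circ q_{i_2;t_1}\circ\cdots\circ q_{i_i;t_{i-1}}$.
   Context: Notation: $n\ge1$; $[b]_+=\max(b,0)$. $\mathbb T_n$: $n$-regular tree with edges labeled $1,\dots,n$, distinct labels at each vertex; $t\overset{k}{-}t'$ an edge labeled $k$; $t_0$ root. Positive integers $r_1,\dots,r_n$, $R=\mathrm{diag}(r_i)$. Formal variables $y_1,\dots,y_n$, $z_{i,s}$ ($1\le s\le r_i-1$), $z_{i,s}=z_{i,r_i-s}$, $z_{i,0}=z_{i,r_i}=1$; $\mathbb P=\mathrm{Trop}(\mathbf y,\mathbf z)$; $\mathbb{QP}$ fraction field of $\mathbb{ZP}$; $\mathbb{QP}(\mathbf x)$ rational functions in $x_1,\dots,x_n$ over $\mathbb{QP}$. $B=(b_{ij})$ skew-symmetrizable integer; $\hat y_i=y_i\prod_jx_j^{b_{ji}}$, $\hat{\mathbf y}^{\mathbf a}=\prod\hat y_i^{a_i}$, $\mathbf x^{\mathbf m}=\prod x_i^{m_i}$. Matrices: $B_{t_0}=B$, $C_{t_0}=I_n$; for $t\overset{k}{-}t'$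 ($\varepsilon=\pm1$, independent): $b_{ij;t'}=-b_{ij;t}$ if $i=k$ or $j=k$, else $b_{ij;t}+r_k([-\varepsilon b_{ik;t}]_+b_{kj;t}+b_{ik;t}[\varepsilon b_{kj;t}]_+)$; $c_{ij;t'}=-c_{ij;t}$ if $j=k$, else $c_{ij;t}+r_k(c_{ik;t}[\varepsilon b_{kj;t}]_++[-\varepsilon c_{ik;t}]_+b_{kj;t})$. The columns $\mathbf c_{k;t}$ of $C_t$ are sign-coherent with sign $\varepsilon_{k;t}$, $\mathbf c_{k;t}^+=\varepsilon_{k;t}\mathbf c_{k;t}$. Form: $D_0$ positive integer diagonal with $D_0RB$ skew-symmetric, $D_0R=\mathrm{diag}(d_1^{-1},\dots,d_n^{-1})$, $(\mathbf u,\mathbf v)_{D_0R}=\mathbf u^TD_0R\mathbf v$. Maps: $q_{k;t}$ is the field automorphism of $\mathbb{QP}(\mathbf x)$ over $\mathbb{QP}$ with $\mathbf x^{\mathbf m}\mapsto\mathbf x^{\mathbf m}(\sum_{s=0}^{r_k}z_{k,s}(\hat{\mathbf y}^{\mathbf c_{k;t}^+})^s)^{-(\mathbf m,d_k\mathbf c_{k;t})_{D_0R}}$. Path data: $d_{(j)}=d_{i_j}$, $r_{(j)}=r_{i_j}$, $\mathbf c_j=\mathbf c_{i_j;t_{j-1}}$, $\mathbf c_j^+=\varepsilon_{i_j;t_{j-1}}\mathbf c_j$, $\hat{\mathbf c}_j^+=B\mathbf c_j^+$. $L_1=\sum_{s=0}^{r_{(1)}}z_{i_1,s}(\hat{\mathbf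 y}^{\mathbf c_1^+})^s$; for $2\le l\le k$, $L_l=\sum_{s=0}^{r_{(l)}}z_{i_l,s}\big(\hat{\mathbf y}^{\mathbf c_l^+}\prod_{j=1}^{l-1}L_j^{-(\hat{\mathbf c}_l^+,d_{(j)}\mathbf c_j)_{D_0R}}\big)^s$. *)

(* Defs.v *)
From HB Require Import structures.
From mathcomp Require Import all_boot all_order all_algebra.
From mathcomp Require Import fraction.
From mathcomp Require Import mpoly.
Set Implicit Arguments.
Unset Strict Implicit.
Unset Printing Implicit Defensive.
Import Order.TTheory GRing.Theory Num.Theory.
Local Open Scope ring_scope.

Section GenCluster.
(* n : rank; r : the integers r_i; D0 : the diagonal of D_0; B : initial
   exchange matrix; lab j : the label i_j of the j-th edge of the path
   (j = 1, ..., k; other values are irrelevant). *)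
Variables (n : nat) (r : 'I_n -> nat) (D0 : 'I_n -> nat) (B : 'M[int]_n)
          (lab : nat -> 'I_n).

Definition posp (a : int) : int := Num.max a 0.

(* mutations of B_t and C_t in direction k (with the choice epsilon = +1,
   the result being independent of epsilon) *)
Definition mutB (k : 'I_n) (Bt : 'M[int]_n) : 'M[int]_n :=
  \matrix_(i, j) if (i == k) || (j == k) then - Bt i j
                 else Bt i j + (r k)%:Z * (posp (- Bt i k) * Bt k j + Bt i k * posp (Bt k j)).

Definition mutC (k : 'I_n) (Bt Ct : 'M[int]_n) : 'M[int]_n :=
  \matrix_(i, j) if j == k then - Ct i j
                 else Ct i j + (r k)%:Z * (Ct i k * posp (Bt k j) + posp (- Ct i k) * Bt k j).

(* seed j = (B_{t_j}, C_{t_j}) along the path t_0 -i_1- t_1 - ... *)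
Fixpoint seed (j : nat) : 'M[int]_n * 'M[int]_n :=
  match j with
  | 0 => (B, 1%:M)
  | j'.+1 => let s := seed j' in (mutB (lab j) s.1, mutC (lab j) s.1 s.2)
  end.

(* sign of a (sign-coherent) c-vector *)
Definition csgn (c : 'cV[int]_n) : int := if [forall i, 0 <= c i 0] then 1 else -1.
Definition cplus_of (c : 'cV[int]_n) : 'cV[int]_n := csgn c *: c.

(* c_j = c_{i_j; t_{j-1}}  (j >= 1), c_j^+, \hat c_j^+ = B c_j^+ *)
Definition cvec (j : nat) : 'cV[int]_n := col (lab j) (seed j.-1).2.
Definition cplus (j : nat) : 'cV[int]_n := cplus_of (cvec j).
Definition chat (j : nat) : 'cV[int]_n := B *m cplus j.

Definition toQ (c : 'cV[int]_n) : 'cV[rat]_n := map_mx (fun z : int => z%:~R) c.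
Definition dval (k : 'I_n) : rat := ((D0 k * r k)%:R)^-1.
Definition formDR (u v : 'cV[rat]_n) : rat := \sum_i u i 0 * (D0 i * r i)%:R * v i 0.
Definition expo (m j : nat) : rat := formDR (toQ (chat m)) (dval (lab j) *: toQ (cvec j)).

Definition Mz : nat := (\max_(i < n) r i).+1.
Definition Nv : nat := n + (n + n * Mz).
Definition K := {fraction {mpoly rat[Nv]}}.

Definition var (v : 'I_Nv) : K := @FracField.tofrac _ ('X_v : {mpoly rat[Nv]}).
Definition xK (i : 'I_n) : K := var (lshift (n + n * Mz) i).
Definition yK (i : 'I_n) : K := var (rshift n (lshift (n * Mz) i)).
(* z_{i,s}, with z_{i,0} = z_{i,r_i} = 1 and z_{i,s} = z_{i,r_i - s} *)
Definition zK (i : 'I_n) (s : nat) : K :=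
  if (s == 0%N) || (r i <= s)%N then 1
  else var (rshift n (rshift n (mxvec_index i (@inord (\max_(i < n) r i) (minn s (r i - s)))))).

(* power with a rational exponent (only ever used with integer exponents) *)
Definition qpow (F : K) (e : rat) : K := if denq e == 1 then F ^ numq e else 0.

Definition yhat (a : 'cV[int]_n) : K :=
  (\prod_i yK i ^ a i 0) * \prod_i xK i ^ (B *m a) i 0.

Definition Fpoly (k : 'I_n) (a : 'cV[int]_n) : K :=
  \sum_(s < (r k).+1) zK k s * yhat a ^+ s.

Definition subst (h : 'I_Nv -> K) (f : K) : K :=
  mmap (fun c : rat => @FracField.tofrac _ (c%:MP : {mpoly rat[Nv]})) h (\n_(repr f)) /
  mmap (fun c : rat => @FracField.tofrac _ (c%:MP : {mpoly rat[Nv]})) h (\d_(repr f)).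

(* q_{k;t}, where c = c_{k;t}: the automorphism of QP(x) over QP with
   x_i |-> x_i F^{-(e_i, d_k c)_{D_0 R}} (hence x^m |-> x^m F^{-(m, d_k c)}) *)
Definition qmap (k : 'I_n) (c : 'cV[int]_n) (f : K) : K :=
  subst (fun v => match split v with
                  | inl i => xK i * qpow (Fpoly k (cplus_of c))
                                      (- (dval k * (D0 i * r i)%:R * (c i 0)%:~R))
                  | inr _ => var v
                  end) f.

Definition qstep (j : nat) (f : K) : K := qmap (lab j) (cvec j) f.
Definition qcomp (i : nat) (f : K) : K := foldr qstep f (iota 1 i).

(* Ls l = [:: L_1; ...; L_l] *)
Fixpoint Ls (l : nat) : seq K :=
  match l with
  | 0 => [::]
  | l'.+1 => let p := Ls l' in
      rcons p (\sum_(s < (r (lab l)).+1) zK (lab l) s *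
                (yhat (cplus l) * \prod_(j < l') qpow (nth 0 p j) (- expo l j.+1)) ^+ s)
  end.
Definition Lv (j : nat) : K := nth 0 (Ls j) j.-1.

End GenCluster.

(* Main.v *)
Require Import Defs.
From HB Require Import structures.
From mathcomp Require Import all_boot all_order all_algebra.
From mathcomp Require Import fraction.
From mathcomp Require Import mpoly.
From mathcomp Require Import ring.
Import Order.TTheory GRing.Theory Num.Theory.
Local Open Scope ring_scope.
Set Implicit Arguments.
Unset Strict Implicit.
Unset Printing Implicit Defensive.

Lemma frac_repr (R : idomainType) (f : {fraction R}) :
  f = (FracField.tofrac (\n_(repr f))) / (FracField.tofrac (\d_(repr f))).
Proof.
have hd : FracField.tofrac (\d_(repr f)) != 0.
  by rewrite tofrac_eq0; case: (repr f).
apply: (mulIf hd); rewrite divfK //.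
rewrite -{1}[f]reprK. case: (repr f) => [[a b] /= hb].
unlock FracField.tofrac.
rewrite -[_ * _]FracField.pi_mul.
apply/eqmodP; rewrite /= FracField.equivfE /= /FracField.mulf /=.
rewrite ?numer_Ratio ?denom_Ratio ?mulf_neq0 ?oner_eq0 //=.
by rewrite !mulr1 mulrC.
Qed.

Section Morph.
Variable F : fieldType.
Definition morph (g : F -> F) :=
  [/\ forall x y, g (x + y) = g x + g y, forall x y, g (x * y) = g x * g y & g 1 = 1].

Variable g : F -> F.
Hypothesis hg : morph g.
Lemma mD x y : g (x + y) = g x + g y. Proof. by case: hg. Qed.
Lemma mM x y : g (x * y) = g x * g y. Proof. by case: hg. Qed.
Lemma m1 : g 1 = 1. Proof. by case: hg. Qed.
Lemma m0 : g 0 = 0.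
Proof. by apply: (addrI (g 0)); rewrite -mD !addr0. Qed.
Lemma mV x : g (x^-1) = (g x)^-1.
Proof.
have [->|x0] := eqVneq x 0; first by rewrite invr0 m0 invr0.
have h : g x * g x^-1 = 1 by rewrite -mM divff // m1.
have gx0 : g x != 0 by apply/eqP=> e; move: h; rewrite e mul0r => /eqP; rewrite eq_sym oner_eq0.
by apply: (mulfI gx0); rewrite h divff.
Qed.
Lemma mXn x k : g (x ^+ k) = g x ^+ k.
Proof. by elim: k => [|k IH]; rewrite ?expr0 ?m1 // !exprS mM IH. Qed.
Lemma mXz x (z : int) : g (x ^ z) = g x ^ z.
Proof. by case: z => k; rewrite ?NegzE ?invr_expz //= ?mV mXn. Qed.
Lemma m_sum I (s : seq I) P (Fn : I -> F) : g (\sum_(i <- s | P i) Fn i) = \sum_(i <- s | P i) g (Fn i).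
Proof. exact: (big_morph g mD m0). Qed.
Lemma m_prod I (s : seq I) P (Fn : I -> F) : g (\prod_(i <- s | P i) Fn i) = \prod_(i <- s | P i) g (Fn i).
Proof. exact: (big_morph g mM m1). Qed.
End Morph.

Lemma morph_comp (F : fieldType) (g h : F -> F) : morph g -> morph h -> morph (g \o h).
Proof.
move=> hg hh; split=> [x y|x y|] /=; by rewrite ?(mD hh) ?(mD hg) ?(mM hh) ?(mM hg) ?(m1 hh) ?(m1 hg).
Qed.
Lemma morph_id (F : fieldType) : morph (@id F).
Proof. by []. Qed.

Section Subst.
Variables (n : nat) (r : 'I_n -> nat).
Local Notation KK := (@K n r).
Local Notation NV := (@Nv n r).
Local Notation MP := {mpoly rat[NV]}.
Local Notation tf := (@FracField.tofrac MP).

Definition cstM (c : rat) : KK := tf (c%:MP).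
Lemma cstM_zmod : zmod_morphism cstM.
Proof. by move=> x y; rewrite /cstM mpolyCB tofracB. Qed.
Lemma cstM_mon : monoid_morphism cstM.
Proof. by split; [rewrite /cstM mpolyC1 tofrac1 | move=> x y; rewrite /cstM mpolyCM tofracM]. Qed.
HB.instance Definition _ := GRing.isZmodMorphism.Build rat KK cstM cstM_zmod.
HB.instance Definition _ := GRing.isMonoidMorphism.Build rat KK cstM cstM_mon.

Definition Phi (h : 'I_NV -> KK) (p : MP) : KK := mmap cstM h p.

Lemma PhiD h p q : Phi h (p + q) = Phi h p + Phi h q. Proof. exact: mmapD. Qed.
Lemma PhiM h p q : Phi h (p * q) = Phi h p * Phi h q. Proof. exact: rmorphM. Qed.
Lemma PhiC h c : Phi h c%:MP = tf c%:MP. Proof. exact: mmapC. Qed.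
Lemma Phi1 h : Phi h 1 = 1. Proof. exact: rmorph1. Qed.
Lemma Phi0 h : Phi h 0 = 0. Proof. exact: rmorph0. Qed.
Lemma PhiXn h p k : Phi h (p ^+ k) = Phi h p ^+ k. Proof. exact: rmorphXn. Qed.
Lemma PhiX h v : Phi h 'X_v = h v. Proof. by rewrite /Phi mmapX mmap1U. Qed.
Lemma Phi_prod h I (s : seq I) P (Fn : I -> MP) :
  Phi h (\prod_(i <- s | P i) Fn i) = \prod_(i <- s | P i) Phi h (Fn i).
Proof. exact: rmorph_prod. Qed.
Lemma Phi_sum h I (s : seq I) P (Fn : I -> MP) :
  Phi h (\sum_(i <- s | P i) Fn i) = \sum_(i <- s | P i) Phi h (Fn i).
Proof. exact: rmorph_sum. Qed.

Lemma subst_E h f : subst h f = Phi h (\n_(repr f)) / Phi h (\d_(repr f)).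
Proof. by []. Qed.

Section Inj.
Variable h : 'I_NV -> KK.
Hypothesis inj : forall p : MP, p != 0 -> Phi h p != 0.
Lemma subst_frac (a b : MP) : b != 0 -> subst h (tf a / tf b : KK) = Phi h a / Phi h b.
Proof.
move=> b0; rewrite subst_E.
set f := (tf a / tf b : KK).
have d0 : \d_(repr f) != 0 by case: (repr f).
have e : a * \d_(repr f) = \n_(repr f) * b.
  apply/eqP; rewrite -tofrac_eq !tofracM.
  have tb : tf b != 0 by rewrite tofrac_eq0.
  have td : tf (\d_(repr f)) != 0 by rewrite tofrac_eq0.
  have E2 : (tf a / tf b : KK) = tf (\n_(repr f)) / tf (\d_(repr f)) := frac_repr f.
  by move/eqP: E2; rewrite (eqr_div _ _ tb td).
have pb := inj b0; have pd := inj d0.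
apply/eqP; rewrite (eqr_div _ _ pd pb) -!PhiM e.
exact: eqxx.
Qed.

Lemma subst_tf (p : MP) : subst h (tf p : KK) = Phi h p.
Proof.
have e : (tf p : KK) = tf p / tf 1 by rewrite tofrac1 divr1.
by rewrite e (subst_frac p (oner_neq0 _)) Phi1 divr1.
Qed.

Lemma subst_morph : morph (subst h).
Proof.
split.
- move=> x y; rewrite [x]frac_repr [y]frac_repr.
  set a := \n_(repr x); set b := \d_(repr x); set c := \n_(repr y); set d := \d_(repr y).
  have b0 : b != 0 by rewrite /b; case: (repr x).
  have d0 : d != 0 by rewrite /d; case: (repr y).
  have tb : (tf b : KK) != 0 by rewrite tofrac_eq0.
  have td : (tf d : KK) != 0 by rewrite tofrac_eq0.
  rewrite (addf_div _ _ tb td) -!tofracM -tofracD.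
  rewrite (subst_frac _ (mulf_neq0 b0 d0)) (subst_frac _ b0) (subst_frac _ d0).
  by rewrite (addf_div _ _ (inj b0) (inj d0)) PhiD !PhiM.
- move=> x y; rewrite [x]frac_repr [y]frac_repr.
  set a := \n_(repr x); set b := \d_(repr x); set c := \n_(repr y); set d := \d_(repr y).
  have b0 : b != 0 by rewrite /b; case: (repr x).
  have d0 : d != 0 by rewrite /d; case: (repr y).
  rewrite mulf_div -!tofracM.
  rewrite (subst_frac _ (mulf_neq0 b0 d0)) (subst_frac _ b0) (subst_frac _ d0).
  by rewrite mulf_div !PhiM.
- by rewrite -(tofrac1 MP) subst_tf Phi1.
Qed.
End Inj.

Section Crit.
Variables (h1 h2 : 'I_NV -> KK).
Definition Gd (p : MP) := exists a s : MP,
  [/\ s != 0, Phi h2 s != 0, Phi h1 p * tf s = tf a & Phi h2 a = tf p * Phi h2 s].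

Lemma Gd_add (p q : MP) : Gd p -> Gd q -> Gd (p + q).
Proof.
move=> [a [s [s0 ps0 e1 e2]]] [a' [s' [s0' ps0' e1' e2']]].
exists (a * s' + a' * s), (s * s'); split.
- exact: mulf_neq0.
- by rewrite PhiM (mulf_neq0 ps0 ps0').
- rewrite PhiD tofracD !tofracM -e1 -e1'. ring.
- rewrite !PhiD !PhiM e2 e2' tofracD; ring.
Qed.

Lemma Gd_mul (p q : MP) : Gd p -> Gd q -> Gd (p * q).
Proof.
move=> [a [s [s0 ps0 e1 e2]]] [a' [s' [s0' ps0' e1' e2']]].
exists (a * a'), (s * s'); split.
- exact: mulf_neq0.
- by rewrite PhiM (mulf_neq0 ps0 ps0').
- rewrite PhiM !tofracM -e1 -e1'; ring.
- rewrite !PhiM e2 e2' tofracM; ring.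
Qed.

Lemma Gd_C (c : rat) : Gd c%:MP.
Proof.
exists c%:MP, 1; split.
- exact: oner_neq0.
- by rewrite Phi1 oner_neq0.
- by rewrite PhiC (tofrac1 MP) mulr1.
- by rewrite Phi1 PhiC mulr1.
Qed.

Hypothesis hX : forall v, Gd 'X_v.

Lemma Gd_all (p : MP) : Gd p.
Proof.
elim/mpolyind: p => [|c m p _ _ Gp].
  by rewrite -mpolyC0; apply: Gd_C.
apply: Gd_add => //; rewrite -mul_mpolyC; apply: Gd_mul; first exact: Gd_C.
rewrite mpolyXE_id; apply: (big_ind Gd); first by rewrite -mpolyC1; apply: Gd_C.
  exact: Gd_mul.
move=> i _; elim: (m i) => [|k IH]; first by rewrite expr0 -mpolyC1; apply: Gd_C.
by rewrite exprS; apply: Gd_mul.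
Qed.

Lemma inj_crit (p : MP) : p != 0 -> Phi h1 p != 0.
Proof.
move=> p0; apply/eqP => e.
have [a [s [s0 ps0 e1 e2]]] := Gd_all p.
move: e1; rewrite e mul0r => /esym/eqP; rewrite tofrac_eq0 => /eqP a0.
move: e2; rewrite a0 Phi0 => /esym/eqP; rewrite mulf_eq0 (negbTE ps0) orbF tofrac_eq0.
by rewrite (negbTE p0).
Qed.
End Crit.

Definition posn (z : int) : nat := match z with Posz m => m | Negz _ => 0%N end.
Definition negn (z : int) : nat := match z with Posz _ => 0%N | Negz m => m.+1 end.

Lemma expz_split (x : KK) (z : int) : x != 0 -> x ^+ posn z = x ^ z * x ^+ negn z.
Proof.
move=> x0; case: z => m /=; first by rewrite expr0 mulr1.
have xm : x ^+ m.+1 != 0 by rewrite expf_neq0.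
by rewrite expr0 -[x ^ Negz m]/((x ^+ m.+1)^-1) (mulVf xm).
Qed.

Lemma var_neq0 (v : 'I_NV) : var v != 0 :> KK.
Proof.
rewrite /var tofrac_eq0; apply/eqP => h.
have := @mcoeffX _ rat (U_(v))%MM (U_(v))%MM; rewrite h mcoeff0 eqxx /= => /eqP.
by rewrite eq_sym oner_eq0.
Qed.

Lemma Phi_eq (h h' : 'I_NV -> KK) (p : MP) : h =1 h' -> Phi h p = Phi h' p.
Proof.
move=> e; rewrite /Phi /mmap; apply: eq_bigr => m _; congr (_ * _).
by rewrite /mmap1; apply: eq_bigr => i _; rewrite e.
Qed.

Lemma subst_eq (h h' : 'I_NV -> KK) (f : KK) : h =1 h' -> subst h f = subst h' f.
Proof. by move=> e; rewrite !subst_E !(Phi_eq _ e). Qed.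

Lemma prod_exprz (x : KK) (I : Type) (s : seq I) (E : I -> int) : x != 0 ->
  \prod_(i <- s) x ^ E i = x ^ (\sum_(i <- s) E i).
Proof.
move=> x0; elim: s => [|y s IH]; first by rewrite !big_nil expr0z.
by rewrite !big_cons IH expfzDr.
Qed.

Section QM.
Variables (B : 'M[int]_n) (k : 'I_n) (a : 'cV[int]_n).
Local Notation F := (@Fpoly n r B k a).
Definition idx_x (i : 'I_n) : 'I_NV := lshift (n + n * Mz r) i.
Definition idx_y (i : 'I_n) : 'I_NV := rshift n (lshift (n * Mz r) i).
Lemma xK_E i : xK r i = var (idx_x i). Proof. by []. Qed.
Lemma yK_E i : yK r i = var (idx_y i). Proof. by []. Qed.

Definition Ppol : MP := \prod_i 'X_(idx_y i) ^+ posn (a i 0) * \prod_i 'X_(idx_x i) ^+ posn ((B *m a) i 0).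
Definition Qpol : MP := \prod_i 'X_(idx_y i) ^+ negn (a i 0) * \prod_i 'X_(idx_x i) ^+ negn ((B *m a) i 0).
Definition zP (s : nat) : MP := if (s == 0%N) || (r k <= s)%N then 1
  else 'X_(rshift n (rshift n (mxvec_index k (@inord (\max_(i < n) r i) (minn s (r k - s)))))).
Definition Fn : MP := \sum_(s < (r k).+1) zP s * Ppol ^+ s * Qpol ^+ (r k - s).

Lemma ratio (chi : {rmorphism MP -> KK}) (g : 'I_n -> KK) :
  (forall i, chi 'X_(idx_y i) = yK r i) -> (forall i, chi 'X_(idx_x i) = g i) ->
  (forall i, g i != 0) ->
  chi Qpol != 0 /\
  chi Ppol = (\prod_i yK r i ^ a i 0 * \prod_i g i ^ (B *m a) i 0) * chi Qpol.
Proof.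
move=> hy hx g0; split.
  rewrite /Qpol rmorphM !rmorph_prod mulf_neq0 //; apply/prodf_neq0 => i _;
  rewrite rmorphXn ?hy ?hx expf_neq0 //; first exact: var_neq0.
rewrite /Ppol /Qpol !rmorphM !rmorph_prod.
have e1 : \prod_i chi ('X_(idx_y i) ^+ posn (a i 0)) =
   \prod_i (yK r i ^ a i 0 * yK r i ^+ negn (a i 0)).
  by apply: eq_bigr => i _; rewrite rmorphXn hy (expz_split _ (var_neq0 _)).
have e2 : \prod_i chi ('X_(idx_x i) ^+ posn ((B *m a) i 0)) =
   \prod_i (g i ^ (B *m a) i 0 * g i ^+ negn ((B *m a) i 0)).
  by apply: eq_bigr => i _; rewrite rmorphXn hx (expz_split _ (g0 i)).
have e3 : \prod_i chi ('X_(idx_y i) ^+ negn (a i 0)) = \prod_i yK r i ^+ negn (a i 0).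
  by apply: eq_bigr => i _; rewrite rmorphXn hy.
have e4 : \prod_i chi ('X_(idx_x i) ^+ negn ((B *m a) i 0)) = \prod_i g i ^+ negn ((B *m a) i 0).
  by apply: eq_bigr => i _; rewrite rmorphXn hx.
rewrite e1 e2 e3 e4 !big_split /=; ring.
Qed.

Lemma split_l (i : 'I_n) : split (idx_x i) = inl i.
Proof. exact: (unsplitK (inl i)). Qed.
Lemma split_r (w : 'I_(n + n * Mz r)) : split (rshift n w : 'I_NV) = inr w.
Proof. exact: (unsplitK (inr w)). Qed.

Lemma chiF (chi : {rmorphism MP -> KK}) (Y : KK) :
  (forall w, chi 'X_(rshift n w : 'I_NV) = var (rshift n w : 'I_NV)) ->
  chi Ppol = Y * chi Qpol ->
  chi Fn = chi Qpol ^+ r k * \sum_(s < (r k).+1) zK r k s * Y ^+ s.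
Proof.
move=> hz hP; rewrite /Fn rmorph_sum mulr_sumr; apply: eq_bigr => s _.
have hs : (s <= r k)%N by rewrite -ltnS ltn_ord.
rewrite 2!rmorphM !rmorphXn.
have -> : chi Qpol ^+ r k = chi Qpol ^+ s * chi Qpol ^+ (r k - s) by rewrite -exprD subnKC.
have -> : chi (zP s) = zK r k s.
  by rewrite /zP /zK; case: ifP => _; [rewrite rmorph1 | rewrite hz].
by rewrite hP exprMn; ring.
Qed.

Lemma mevalXn1 (v : 'I_NV -> rat) (p : MP) (m : nat) : meval v (p ^+ m) = meval v p ^+ m.
Proof. by elim: m => [|m IH]; rewrite ?expr0 ?meval1 // !exprS mevalM IH. Qed.

Lemma meval_pp (f : 'I_n -> 'I_NV) (E : 'I_n -> nat) :
  meval (fun _ => 1 : rat) (\prod_i 'X_(f i) ^+ E i : MP) = 1.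
Proof.
rewrite (big_morph _ (mevalM _) (meval1 _)); apply: big1 => i _.
by rewrite mevalXn1 mevalXU expr1n.
Qed.

Lemma Fn_neq0 : Fn != 0.
Proof.
apply/eqP => h.
have : meval (fun _ => 1 : rat) Fn = (r k).+1%:R.
  have -> : ((r k).+1%:R : rat) = \sum_(s < (r k).+1) (1 : rat) by rewrite sumr_const card_ord.
  rewrite /Fn raddf_sum /=; apply: eq_bigr => s _.
  rewrite 2!mevalM !mevalXn1.
  have -> : meval (fun _ => 1 : rat) (zP s) = 1.
    by rewrite /zP; case: ifP => _; [rewrite meval1 | rewrite mevalXU].
  have hP : meval (fun _ => 1 : rat) Ppol = 1 by rewrite /Ppol mevalM !meval_pp mulr1.
  have hQ : meval (fun _ => 1 : rat) Qpol = 1 by rewrite /Qpol mevalM !meval_pp mulr1.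
  by rewrite hP hQ !expr1n !mulr1.
rewrite h meval0 => /eqP; by rewrite eq_sym pnatr_eq0.
Qed.

Lemma tf_PQ : (tf Qpol : KK) != 0 /\ (tf Ppol : KK) = @yhat n r B a * tf Qpol.
Proof.
have := @ratio (@FracField.tofrac MP) (xK r) (fun i => erefl) (fun i => erefl)
   (fun i => var_neq0 _).
by [].
Qed.

Lemma tf_Fn : (tf Fn : KK) = tf Qpol ^+ r k * F.
Proof.
by rewrite (@chiF (@FracField.tofrac MP) (@yhat n r B a) (fun w => erefl) (proj2 tf_PQ)).
Qed.

Lemma F_neq0 : F != 0.
Proof.
apply/eqP => h; have := tf_Fn; rewrite h mulr0 => /eqP; rewrite tofrac_eq0.
by rewrite (negbTE Fn_neq0).
Qed.

Section E.
Variable e : 'I_n -> int.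
Hypothesis he : \sum_i e i * (B *m a) i 0 = 0.

Definition h1 (v : 'I_NV) : KK :=
  match split v with inl i => xK r i * F ^ e i | inr _ => var v end.
Definition h2 (v : 'I_NV) : KK :=
  match split v with inl i => xK r i * F ^ (- e i) | inr _ => var v end.

Lemma Phi_h2_PQ : Phi h2 Qpol != 0 /\ Phi h2 Ppol = @yhat n r B a * Phi h2 Qpol.
Proof.
have hy : forall i, mmap cstM h2 'X_(idx_y i) = yK r i.
  by move=> i; rewrite -/(Phi h2 _) PhiX /h2 split_r.
have hx : forall i, mmap cstM h2 'X_(idx_x i) = xK r i * F ^ (- e i).
  by move=> i; rewrite -/(Phi h2 _) PhiX /h2 split_l.
have g0 : forall i, xK r i * F ^ (- e i) != 0.
  move=> i; exact: (mulf_neq0 (var_neq0 _) (expfz_neq0 _ F_neq0)).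
have [h3 h4] := @ratio (mmap cstM h2) _ hy hx g0.
split; first exact: h3.
rewrite /Phi h4; congr (_ * _).
rewrite /yhat; congr (_ * _).
rewrite (eq_bigr (fun i => xK r i ^ (B *m a) i 0 * F ^ (- e i * (B *m a) i 0))); last first.
  by move=> i _; rewrite expfzMl exprz_exp.
rewrite big_split /= (prod_exprz _ _ F_neq0).
have -> : \sum_i - e i * (B *m a) i 0 = 0.
  have -> : \sum_i - e i * (B *m a) i 0 = - \sum_i e i * (B *m a) i 0.
    by rewrite -sumrN; apply: eq_bigr => i _; rewrite mulNr.
  by rewrite he oppr0.
by rewrite expr0z mulr1.
Qed.

Lemma Phi_h2_Fn : Phi h2 Fn = Phi h2 Qpol ^+ r k * F.
Proof.
have hz : forall w, mmap cstM h2 'X_(rshift n w : 'I_NV) = var (rshift n w : 'I_NV).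
  by move=> w; rewrite -/(Phi h2 _) PhiX /h2 split_r.
exact: (@chiF (mmap cstM h2) (@yhat n r B a) hz (proj2 Phi_h2_PQ)).
Qed.

Lemma Qpol_neq0 : Qpol != 0.
Proof. by apply/eqP => h; move: (proj1 tf_PQ); rewrite h tofrac0 eqxx. Qed.

Lemma canc (A Q X : KK) : X != 0 -> A * X^-1 * (Q * X) = A * Q.
Proof. by move=> x0; rewrite (mulrC Q) mulrA (mulfVK x0). Qed.

Lemma Gd_v (v : 'I_NV) : Gd h1 h2 'X_v.
Proof.
have [PQ0 _] := Phi_h2_PQ.
have TQ0 := proj1 tf_PQ.
have hF := F_neq0.
case E: (split v) => [i|w].
- have -> : v = idx_x i by rewrite -(splitK v) E.
  have hxv : (tf 'X_(idx_x i) : KK) = xK r i by [].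
  case Ee: (e i) => [m|m].
  + exists ('X_(idx_x i) * Fn ^+ m), ((Qpol ^+ r k) ^+ m); split.
    * exact: (expf_neq0 _ (expf_neq0 _ Qpol_neq0)).
    * rewrite !PhiXn; exact: (expf_neq0 _ (expf_neq0 _ PQ0)).
    * rewrite PhiX /h1 split_l Ee tofracM !tofracXn tf_Fn hxv -exprnP exprMn; ring.
    * rewrite PhiM PhiX /h2 split_l Ee !PhiXn Phi_h2_Fn hxv -exprnN exprMn.
      exact: (canc _ _ (expf_neq0 m hF)).
  + have Fm : F ^+ m.+1 != 0 := expf_neq0 _ hF.
    exists ('X_(idx_x i) * (Qpol ^+ r k) ^+ m.+1), (Fn ^+ m.+1); split.
    * exact: (expf_neq0 _ Fn_neq0).
    * rewrite PhiXn Phi_h2_Fn; exact: (expf_neq0 _ (mulf_neq0 (expf_neq0 _ PQ0) hF)).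
    * rewrite PhiX /h1 split_l Ee tofracM !tofracXn tf_Fn hxv.
      rewrite -[F ^ Negz m]/((F ^+ m.+1)^-1) exprMn.
      exact: (canc _ _ Fm).
    * rewrite PhiM PhiX /h2 split_l Ee !PhiXn Phi_h2_Fn hxv NegzE opprK -exprnP exprMn; ring.
- exists 'X_v, 1; split.
  + exact: oner_neq0.
  + by rewrite Phi1 oner_neq0.
  + by rewrite PhiX /h1 E (tofrac1 MP) mulr1.
  + by rewrite PhiX /h2 E Phi1 mulr1.
Qed.

Lemma inj_h1 (p : MP) : p != 0 -> Phi h1 p != 0.
Proof. exact: (inj_crit Gd_v). Qed.

Lemma morph_h1 : morph (subst h1).
Proof. exact: (subst_morph inj_h1). Qed.

Lemma h1_var (v : 'I_NV) : subst h1 (var v) = h1 v.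
Proof. by rewrite /var (subst_tf inj_h1) PhiX. Qed.

Lemma h1_yhat (b : 'cV[int]_n) :
  subst h1 (@yhat n r B b) = @yhat n r B b * F ^ (\sum_i e i * (B *m b) i 0).
Proof.
have hm := morph_h1.
rewrite /yhat (mM hm) !(m_prod hm).
have -> : \prod_i subst h1 (yK r i ^ b i 0) = \prod_i yK r i ^ b i 0.
  by apply: eq_bigr => i _; rewrite (mXz hm) yK_E h1_var /h1 split_r.
rewrite [X in _ * X = _](eq_bigr (fun i => xK r i ^ (B *m b) i 0 * F ^ (e i * (B *m b) i 0))); last first.
  by move=> i _; rewrite (mXz hm) xK_E h1_var /h1 split_l expfzMl exprz_exp.
by rewrite big_split /= (prod_exprz _ _ F_neq0) mulrA.
Qed.
End E.
End QM.
End Subst.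
Lemma posp_scale (d x : int) : 0 <= d -> d * posp x = posp (d * x).
Proof. by move=> d0; rewrite /posp maxr_pMr // mulr0. Qed.

Section Seeds.
Variables (n : nat) (r D0 : 'I_n -> nat) (B : 'M[int]_n) (lab : nat -> 'I_n).
Local Notation Dz i := ((D0 i * r i)%N%:Z).
Hypothesis skew : forall i j, Dz i * B i j = - (Dz j * B j i).

Lemma Dz_ge0 i : 0 <= Dz i. Proof. by []. Qed.

Lemma seed_skew t i j :
  Dz i * (seed r B lab t).1 i j = - (Dz j * (seed r B lab t).1 j i).
Proof.
elim: t i j => [|t IH] i j; first exact: skew.
rewrite /= /mutB !mxE.
set Bt := (seed r B lab t).1; set k := lab t.+1.
rewrite [(j == k) || _]orbC.
case: ((i == k) || (j == k)).
  by rewrite !mulrN IH opprK.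
have f1 : Dz i * posp (- Bt i k) = Dz k * posp (Bt k i).
  by rewrite (posp_scale _ (Dz_ge0 i)) mulrN IH opprK -(posp_scale _ (Dz_ge0 k)).
have f2 : Dz j * posp (- Bt j k) = Dz k * posp (Bt k j).
  by rewrite (posp_scale _ (Dz_ge0 j)) mulrN IH opprK -(posp_scale _ (Dz_ge0 k)).
have f3 := IH i k; have f4 := IH j k; have f5 := IH i j.
have -> : Dz i * (Bt i j + (r k)%:Z * (posp (- Bt i k) * Bt k j + Bt i k * posp (Bt k j))) =
  Dz i * Bt i j + (r k)%:Z * ((Dz i * posp (- Bt i k)) * Bt k j + (Dz i * Bt i k) * posp (Bt k j)) by ring.
have -> : Dz j * (Bt j i + (r k)%:Z * (posp (- Bt j k) * Bt k i + Bt j k * posp (Bt k i))) =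
  Dz j * Bt j i + (r k)%:Z * ((Dz j * posp (- Bt j k)) * Bt k i + (Dz j * Bt j k) * posp (Bt k i)) by ring.
rewrite f1 f2 f3 f4 f5; ring.
Qed.

Lemma seed_int t : exists C' : 'M[int]_n,
  forall i j, Dz i * (seed r B lab t).2 i j = C' i j * Dz j.
Proof.
elim: t => [|t [C' IH]].
  exists 1%:M => i j; rewrite /= !mxE; case: eqP => [->|_]; by rewrite ?mulr1 ?mul1r ?mulr0 ?mul0r.
set Bt := (seed r B lab t).1; set Ct := (seed r B lab t).2; set k := lab t.+1.
exists (\matrix_(i, j) if j == k then - C' i j
   else C' i j + (r k)%:Z * (C' i k * posp (- Bt j k) + posp (- C' i k) * (- Bt j k))).
move=> i j; rewrite /= /mutC !mxE -/Bt -/Ct -/k.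
case: (j == k); first by rewrite mulrN IH mulNr.
have g1 := IH i k; have g0 := IH i j.
have g2 : Dz i * posp (- Ct i k) = posp (- C' i k) * Dz k.
  by rewrite [RHS]mulrC (posp_scale _ (Dz_ge0 k)) (posp_scale _ (Dz_ge0 i)) !mulrN g1 (mulrC (C' i k)).
have g3 : Dz k * posp (Bt k j) = Dz j * posp (- Bt j k).
  by rewrite (posp_scale _ (Dz_ge0 k)) (posp_scale _ (Dz_ge0 j)) mulrN seed_skew.
have g4 : Dz k * Bt k j = - (Dz j * Bt j k) by rewrite seed_skew.
have -> : Dz i * (Ct i j + (r k)%:Z * (Ct i k * posp (Bt k j) + posp (- Ct i k) * Bt k j)) =
  Dz i * Ct i j + (r k)%:Z * ((Dz i * Ct i k) * posp (Bt k j) + (Dz i * posp (- Ct i k)) * Bt k j) by ring.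
rewrite g0 g1 g2.
have -> : C' i j * Dz j + (r k)%:Z * (C' i k * Dz k * posp (Bt k j) + posp (- C' i k) * Dz k * Bt k j) =
  C' i j * Dz j + (r k)%:Z * (C' i k * (Dz k * posp (Bt k j)) + posp (- C' i k) * (Dz k * Bt k j)) by ring.
rewrite g3 g4; ring.
Qed.
End Seeds.

Lemma qpow_int n (r : 'I_n -> nat) (F : K r) (z : int) : qpow F z%:~R = F ^ z.
Proof. by rewrite /qpow denq_int eqxx numq_int. Qed.

Lemma morph_ext (F : fieldType) (g g' : F -> F) : g =1 g' -> morph g -> morph g'.
Proof.
move=> e [h1 h2 h3]; split=> [x y|x y|]; by rewrite -!e ?h1 ?h2 ?h3.
Qed.

Lemma morph_qpow n (r : 'I_n -> nat) (g : K r -> K r) (F : K r) (e : rat) :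
  morph g -> g (qpow F e) = qpow (g F) e.
Proof. by move=> hg; rewrite /qpow; case: ifP => _; [exact: mXz | exact: m0]. Qed.

Section Main.
Variables (n : nat) (r D0 : 'I_n -> nat) (B : 'M[int]_n) (lab : nat -> 'I_n).
Local Notation Dz i := ((D0 i * r i)%N%:Z).
Hypothesis rpos : forall i, (0 < r i)%N.
Hypothesis Dpos : forall i, (0 < D0 i)%N.
Hypothesis skew : forall i j, Dz i * B i j = - (Dz j * B j i).
Local Notation KK := (@K n r).

Lemma Dz_neq0 i : Dz i != 0.
Proof. by rewrite eqz_nat muln_eq0 negb_or -!lt0n rpos Dpos. Qed.

Lemma quad0 (c : 'cV[int]_n) : \sum_i Dz i * c i 0 * (B *m c) i 0 = 0.
Proof.
set S := \sum_i _.
have e1 : S = \sum_i \sum_l Dz i * B i l * (c i 0 * c l 0).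
  rewrite /S; apply: eq_bigr => i _; rewrite mxE mulr_sumr; apply: eq_bigr => l _; ring.
have e2 : S = - S.
  rewrite {1}e1 exchange_big /= e1 -sumrN; apply: eq_bigr => l _.
  rewrite -sumrN; apply: eq_bigr => i _; rewrite skew mulNr (mulrC (c i 0)); by [].
have : S *+ 2 == 0 by rewrite mulr2n {1}e2 addNr.
by rewrite mulrn_eq0 => /eqP.
Qed.

Section Step.
Variable j : nat.
Local Notation k := (lab j).
Local Notation c := (@cvec n r B lab j).
Local Notation F := (@Fpoly n r B k (cplus_of c)).

Lemma step_ex : exists e : 'I_n -> int,
  (forall i, e i * Dz k = - (Dz i * c i 0)) /\ \sum_i e i * (B *m cplus_of c) i 0 = 0.
Proof.
have [C' hC] := seed_int lab skew j.-1.
exists (fun i => - C' i k); split.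
  by move=> i; rewrite /cvec mxE hC mulNr.
have hT : \sum_i - C' i k * (B *m c) i 0 = 0.
  have : (\sum_i - C' i k * (B *m c) i 0) * Dz k = 0.
    rewrite mulr_suml (eq_bigr (fun i => - (Dz i * c i 0 * (B *m c) i 0))).
      by rewrite sumrN quad0 oppr0.
    move=> i _; have ci : c i 0 = (seed r B lab j.-1).2 i k by rewrite mxE.
    by rewrite ci hC; ring.
  by move/eqP; rewrite mulf_eq0 (negbTE (Dz_neq0 k)) orbF => /eqP.
rewrite /cplus_of -scalemxAr.
rewrite (eq_bigr (fun i => csgn c * (- C' i k * (B *m c) i 0))).
  by rewrite -mulr_sumr hT mulr0.
by move=> i _; rewrite mxE; ring.
Qed.

Lemma Dkq0 (i : 'I_n) : ((D0 i * r i)%:R : rat) != 0.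
Proof. by rewrite pnatr_eq0 muln_eq0 negb_or -!lt0n rpos Dpos. Qed.

Lemma step_props : [/\ morph (@qstep n r D0 B lab j),
  (forall b, @qstep n r D0 B lab j (yhat r B b) =
     yhat r B b * qpow F (- formDR r D0 (toQ (B *m b)) (dval r D0 k *: toQ c))) &
  (forall w, @qstep n r D0 B lab j (var (rshift n w : 'I_(Nv r))) = var (rshift n w : 'I_(Nv r)))].
Proof.
have [e [he1 he2]] := step_ex.
have er : forall i, ((e i)%:~R : rat) = - (dval r D0 k * (D0 i * r i)%:R * (c i 0)%:~R).
  move=> i; have E : ((e i)%:~R : rat) * (D0 k * r k)%:R = - ((D0 i * r i)%:R * (c i 0)%:~R).
    by have := congr1 (fun z : int => (z%:~R : rat)) (he1 i); rewrite /= intrM intrN intrM.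
  apply: (mulIf (Dkq0 k)); rewrite E /dval.
  by field; rewrite !pnatr_eq0 -!lt0n rpos Dpos.
have eq : @qstep n r D0 B lab j =1 subst (h1 B k (cplus_of c) e).
  move=> f; rewrite /qstep /qmap; apply: subst_eq => v; rewrite /h1.
  case: (split v) => [i|w]; last reflexivity.
  by rewrite -qpow_int er.
split; first exact: (morph_ext (fun f => esym (eq f)) (morph_h1 r k he2)).
  move=> b; rewrite eq (h1_yhat r k he2 b) -qpow_int; congr (_ * qpow _ _).
  rewrite /formDR (big_morph (fun z : int => z%:~R : rat) (@intrD _) (mulr0z _)) -sumrN.
  by apply: eq_bigr => i _; rewrite intrM er !mxE; ring.
by move=> w; rewrite eq (h1_var k he2) /h1 split_r.
Qed.
End Step.

Local Notation qc := (@qcomp n r D0 B lab).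
Local Notation qs := (@qstep n r D0 B lab).
Local Notation Yh m := (yhat r B (cplus r B lab m)).

Lemma qcompS i (f : KK) : qc i.+1 f = qc i (qs i.+1 f).
Proof.
have e : iota 1 i.+1 = iota 1 i ++ [:: i.+1] by rewrite -[i.+1]addn1 iotaD add1n addn1.
by rewrite /qcomp e foldr_cat.
Qed.

Lemma qcomp_morph i : morph (qc i).
Proof.
elim: i => [|i IH].
  exact: (@morph_ext _ id _ (fun f => erefl) (morph_id _)).
have [hg _ _] := step_props i.+1.
exact: (morph_ext (fun f => esym (qcompS i f)) (morph_comp IH hg)).
Qed.

Lemma qcomp_var i w : qc i (var (rshift n w : 'I_(Nv r))) = var (rshift n w : 'I_(Nv r)).
Proof.
elim: i => [|i IH]; first reflexivity.
have [_ _ hv] := step_props i.+1.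
by rewrite qcompS hv IH.
Qed.

Lemma qcomp_zK i (k : 'I_n) s : qc i (zK r k s) = zK r k s.
Proof.
rewrite /zK; case: ifP => _; first exact: (m1 (qcomp_morph i)).
exact: qcomp_var.
Qed.

Lemma Ls_size l : size (Ls r D0 B lab l) = l.
Proof. by elim: l => [|l IH] //=; rewrite size_rcons IH. Qed.

Lemma Ls_nth l j : (j < l)%N -> nth 0 (Ls r D0 B lab l) j = Lv r D0 B lab j.+1.
Proof.
elim: l => [|l IH] //; rewrite ltnS leq_eqVlt => /orP [/eqP -> | hj]; first by [].
by rewrite /= nth_rcons Ls_size hj IH.
Qed.

Lemma Lv_S l : Lv r D0 B lab l.+1 =
  \sum_(s < (r (lab l.+1)).+1) zK r (lab l.+1) s *
     (Yh l.+1 * \prod_(j < l) qpow (Lv r D0 B lab j.+1) (- expo r D0 B lab l.+1 j.+1)) ^+ s.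
Proof.
have E : \prod_(j < l) qpow (nth 0 (Ls r D0 B lab l) j) (- expo r D0 B lab l.+1 j.+1) =
  \prod_(j < l) qpow (Lv r D0 B lab j.+1) (- expo r D0 B lab l.+1 j.+1).
  by apply: eq_bigr => j _; rewrite Ls_nth.
by rewrite /Lv /= nth_rcons Ls_size ltnn eqxx E.
Qed.

Lemma mainL i : forall m, (i <= m)%N ->
  qc i (Yh m) = Yh m * \prod_(1 <= j < i.+1) qpow (Lv r D0 B lab j) (- expo r D0 B lab m j).
Proof.
elim: i => [|i IH] m hm.
  by rewrite big_geq // mulr1.
have [hg hy hv] := step_props i.+1.
have hq := qcomp_morph i.
rewrite qcompS hy (mM hq) (morph_qpow _ _ hq) (IH m (ltnW hm)).
have -> : qc i (Fpoly r B (lab i.+1) (cplus_of (cvec r B lab i.+1))) = Lv r D0 B lab i.+1.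
  rewrite Lv_S /Fpoly (m_sum hq); apply: eq_bigr => s _.
  rewrite (mM hq) qcomp_zK (mXn hq) (IH i.+1 (leqnSn i)).
  by rewrite big_add1 /= big_mkord.
rewrite -mulrA; congr (_ * _).
rewrite [RHS](big_nat_recr i.+1) //.
Qed.
End Main.

Theorem lemmaL3 (n : nat) (r D0 : 'I_n -> nat) (B : 'M[int]_n)
  (k : nat) (lab : nat -> 'I_n) :
  (0 < n)%N ->
  (forall i, (0 < r i)%N) ->
  (forall i, (0 < D0 i)%N) ->
  (forall i j, (D0 i * r i)%:Z * B i j = - ((D0 j * r j)%:Z * B j i)) ->
  forall i m : nat, (1 <= i <= k)%N -> (i <= m <= k)%N ->
    @qcomp n r D0 B lab i (@yhat n r B (@cplus n r B lab m)) =
    @yhat n r B (@cplus n r B lab m) *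
      \prod_(1 <= j < i.+1)
         @qpow n r (@Lv n r D0 B lab j) (- @expo n r D0 B lab m j).
Proof.
move=> _ rpos Dpos skew i m _ /andP [him _].
exact: (@mainL n r D0 B lab rpos Dpos skew i m him).
Qed.
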